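(* Let $A$ be a finite set. The action of $\Sigma_A$ on $\vec P(Y^A)_{\mathbf0}^{\mathbf1}$ is free.
   Context: A precubical set ($\square$-set) $K$ is a sequence of pairwise disjoint sets $(K[n])_{n\ge0}$ with face maps $d^\varepsilon_i:K[n]\to K[n-1]$ ($1\le i\le n$, $\varepsilon\in\{0,1\}$) satisfying $d^\varepsilon_i d^\eta_j=d^\eta_{j-1}d^\varepsilon_i$ for $i<j$; bi-pointed $\square$-sets have chosen vertices $\mathbf0,\mathbf1\in K[0]$. Geometric realization: $|K|=\coprod_n K[n]\times[0,1]^n/\sim$ with $(d^\varepsilon_i c,\mathbf x)\sim(c,\delta^\varepsilon_i\mathbf x)$, $\delta^\varepsilon_i$ inserting $\varepsilon$ as $i$-th coordinate; $[c;\mathbf x]$ is the class. A path $\alpha:[0,1]\to|K|$ is a d-path if there are $0=t_0<\dots<t_m=1$, $c_k\in K[n_k]$ and continuous $\beta_k:[t_{k-1},t_k]\to[0,1]^{n_k}$ with non-decreasing coordinates such that $\alpha(t)=[c_k;\beta_k(t)]$ on $[t_{k-1},t_k]$. $\vec P(K)_{\mathbf0}^{\mathbf1}$ is the space of d-paths from $\mathbf0$ to $\mathbf1$. $Y^A$ is the bi-pointed $\square$-set where $Y^A[k]$ is the set of pairs $(c,<)$ with $c:A\to\{0,*,1\}$, $|c^{-1}( * )|=k$, and $<$ a strict total order on $c^{-1}( * )$; if $c^{-1}( * )=\{a_1<\dots<a_k\}$ then $d^\varepsilon_i(c,<)=(c',<')$ where $c'(a_i)=\varepsilon$, $c'=c$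 elsewhere, and $<'$ is the restriction of $<$ to $c^{-1}( * )\setminus\{a_i\}$; $\mathbf0=(\text{const}_0,\emptyset)$, $\mathbf1=(\text{const}_1,\emptyset)$. $\Sigma_A$ acts on $Y^A$ from the right by $(c,<)\sigma=(c\circ\sigma,<\sigma)$ with $a\,(<\sigma)\,b$ iff $\sigma(a)<\sigma(b)$, inducing an action $(\alpha\sigma)(t)=\alpha(t)\sigma$ on $\vec P(Y^A)_{\mathbf0}^{\mathbf1}$, where $[c;\mathbf x]\sigma=[c\sigma;\mathbf x]$. *)

(* Defs.v *)
From HB Require Import structures.
From Stdlib Require Import Relations.
From mathcomp Require Import all_boot all_order all_algebra all_fingroup.
From mathcomp Require Import all_classical all_reals all_analysis.
Set Implicit Arguments. Unset Strict Implicit. Unset Printing Implicit Defensive.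
Import Order.TTheory GRing.Theory Num.Theory numFieldNormedType.Exports.

(* Geometric realization of a (pre)cubical set given by its cell sets   *)
(* cell n = K[n] and face maps face n i e = d^e_{i+1} : K[n+1] -> K[n]   *)
(* (face indices are 0-based: i : 'I_n.+1 stands for the paper's i+1).  *)
Section Realization.
Variable R : realType.
Variable cell : nat -> Type.
Variable face : forall n, 'I_n.+1 -> bool -> cell n.+1 -> cell n.

(* representatives (c, x) of points [c; x] of |K| *)
Definition rpt := {n : nat & (cell n * ('I_n -> R))%type}.

(* delta^e_i : [0,1]^n -> [0,1]^(n+1), inserting e as (i+1)-th coordinate *)
Definition coins n (i : 'I_n.+1) (e : bool) (x : 'I_n -> R) : 'I_n.+1 -> R :=
  fun j => match unlift i j with None => ((e : nat)%:R)%R | Some j' => x j' end.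

Inductive rstep : rpt -> rpt -> Prop :=
  RStep n (i : 'I_n.+1) (e : bool) (c : cell n.+1) (x : 'I_n -> R) :
    rstep (existT _ n (face i e c, x)) (existT _ n.+1 (c, coins i e x)).

(* the equivalence relation generated: two representatives give the same
   point of |K| *)
Definition requiv : rpt -> rpt -> Prop := clos_refl_sym_trans rpt rstep.

Local Open Scope ring_scope.
Local Open Scope classical_set_scope.

Definition is_dpath (alpha : R -> rpt) (p0 p1 : rpt) : Prop :=
  exists (m : nat) (t : nat -> R)
         (piece : nat -> {n : nat & (cell n * (R -> 'I_n -> R))%type}),
    [/\ (0 < m)%N, t 0%N = 0, t m = 1 &
        forall k, (k < m)%N -> t k < t k.+1]
    /\ (forall k, (k < m)%N ->
         match piece k with existT n (c, b) =>
           [/\ (forall j : 'I_n, {within `[t k, t k.+1]%classic, continuous ((fun u : R => b u j) : R -> R)}),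
               (forall (j : 'I_n) u v, t k <= u -> u <= v -> v <= t k.+1 -> b u j <= b v j),
               (forall (j : 'I_n) u, t k <= u <= t k.+1 -> 0 <= b u j <= 1) &
               (forall u, t k <= u <= t k.+1 -> requiv (alpha u) (existT _ n (c, b u)))]
         end)
    /\ requiv (alpha 0) p0 /\ requiv (alpha 1) p1.

End Realization.

(* A cell (c, <) is encoded as (c, s) where c : A -> {0,*,1} is encoded *)
(* by option bool (Some false = 0, None = star, Some true = 1) and s is the *)
(* duplicate-free list of c^{-1}(star) listed in <-increasing order.        *)
Section YA.
Variable A : finType.

Definition ycell_ok (k : nat) (p : {ffun A -> option bool} * seq A) : bool :=
  [&& uniq p.2, size p.2 == k & [forall a, (p.1 a == None) == (a \in p.2)]].

Definition ycell (k : nat) := {p : {ffun A -> option bool} * seq A | ycell_ok k p}.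

(* d^e_{i+1}: set the (i+1)-th starred element a_{i+1} to e, drop it from the order *)
Definition yface_raw (i : nat) (e : bool) (p : {ffun A -> option bool} * seq A) :=
  ([ffun a => if (a \in p.2) && (index a p.2 == i) then Some e else p.1 a],
   [seq a <- p.2 | index a p.2 != i]).

Lemma count_index_eq (T : eqType) (s : seq T) i :
  uniq s -> (i < size s)%N -> count (fun a => index a s == i) s = 1%N.
Proof.
case: s => [//|x0 s'] us lt; set s := x0 :: s' in us lt *.
have -> : count (fun a => index a s == i) s = count (pred1 i) (map (index^~ s) s).
  by rewrite count_map.
have -> : map (index^~ s) s = iota 0 (size s).
  apply: (@eq_from_nth _ 0%N); first by rewrite size_map size_iota.
  move=> j; rewrite size_map => lj.
  by rewrite (nth_map x0) // nth_iota // add0n index_uniq.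
by rewrite count_uniq_mem ?iota_uniq // mem_iota lt.
Qed.

Lemma yface_ok n (i : 'I_n.+1) e (c : ycell n.+1) : ycell_ok n (yface_raw i e (val c)).
Proof.
case: c => [[f s] /= /and3P [us /eqP ss /forallP H]].
rewrite /ycell_ok /=; apply/and3P; split.
- exact: filter_uniq.
- have := count_predC (fun a => index a s == i) s.
  rewrite count_index_eq ?ss //= add1n => -[E].
  by rewrite size_filter E.
- apply/forallP => a; rewrite ffunE mem_filter.
  have := H a; case: (boolP (a \in s)) => as_ /=.
  + by case: (f a) => [b|] //= _; case: (index a s == i).
  + by rewrite andbF; apply.
Qed.

Definition yface n (i : 'I_n.+1) (e : bool) (c : ycell n.+1) : ycell n :=
  exist (ycell_ok n) _ (yface_ok i e c).

(* right action: (c, <) sigma = (c o sigma, <sigma), a <sigma b iff sigma a < sigma b *)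
Definition yact_raw (s : {perm A}) (p : {ffun A -> option bool} * seq A) :=
  ([ffun a => p.1 (s a)], map (s^-1)%g p.2).

Lemma yact_ok n (s : {perm A}) (c : ycell n) : ycell_ok n (yact_raw s (val c)).
Proof.
case: c => [[f l] /= /and3P [ul /eqP sl /forallP H]].
rewrite /ycell_ok /=; apply/and3P; split.
- by rewrite map_inj_uniq //; apply: perm_inj.
- by rewrite size_map sl.
- apply/forallP => a; rewrite ffunE.
  by rewrite -[a in a \in _](permK s a) (mem_map (@perm_inj _ s^-1%g)).
Qed.

Definition yact n (s : {perm A}) (c : ycell n) : ycell n := exist (ycell_ok n) _ (yact_ok s c).

Lemma yvert_ok (b : bool) : ycell_ok 0 ([ffun _ => Some b], [::]).
Proof. by rewrite /ycell_ok /=; apply/forallP => a; rewrite ffunE. Qed.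

Definition yvert (b : bool) : ycell 0 := exist (ycell_ok 0) _ (yvert_ok b).

Variable R : realType.

Definition ypt (b : bool) : rpt R ycell := existT _ 0%N (yvert b, fun _ => 0%R).

Definition ypt_act (s : {perm A}) (p : rpt R ycell) : rpt R ycell :=
  existT _ (projT1 p) (yact s (projT2 p).1, (projT2 p).2).

End YA.

(* Main.v *)
Require Import Defs.
From HB Require Import structures.
From Stdlib Require Import Relations.
From mathcomp Require Import all_boot all_order all_algebra all_fingroup.
From mathcomp Require Import all_classical all_reals all_analysis.
From mathcomp Require Import zify.
Set Implicit Arguments. Unset Strict Implicit. Unset Printing Implicit Defensive.
Import Order.TTheory GRing.Theory Num.Theory numFieldNormedType.Exports.
Local Open Scope ring_scope.

Section Inv.
Variable A : finType.
Variable R : realType.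

Definition xat n (x : 'I_n -> R) (k : nat) : R :=
  if insub k is Some o then x o else 0.

Lemma xatE n (x : 'I_n -> R) (o : 'I_n) : xat x o = x o.
Proof. by rewrite /xat valK. Qed.

Definition pl (p : rpt R (ycell A)) : seq A := (val (projT2 p).1).2.
Definition pf (p : rpt R (ycell A)) := (val (projT2 p).1).1.

Definition coord (p : rpt R (ycell A)) (a : A) : R :=
  match pf p a with Some b => (b : nat)%:R | None => xat (projT2 p).2 (index a (pl p)) end.

Definition ilist (p : rpt R (ycell A)) : seq A :=
  [seq a <- pl p | (0 < xat (projT2 p).2 (index a (pl p)) < 1)].

Lemma index_filter_ne (l : seq A) (i : nat) a : uniq l -> a \in l -> index a l != i ->
  index a [seq b <- l | index b l != i] = unbump i (index a l).
Proof.
elim: l i => [//|x l IH] i /= /andP [xl ul] al.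
have E : [seq b <- l | (if x == b then 0 else (index b l).+1) != i] =
         [seq b <- l | (index b l).+1 != i].
  apply: eq_in_filter => b bl; have -> // : (x == b) = false.
  by apply/negbTE/eqP => xb; rewrite xb bl in xl.
rewrite E; case: (eqVneq x a) => [<-|xa].
  by rewrite eqxx /= => i0; rewrite i0 /= eqxx /unbump.
move: al; rewrite in_cons eq_sym (negPf xa) /= => al.
case: i E => [|i] E ine.
  by rewrite eqxx /= (@eq_filter _ _ predT) // filter_predT /unbump /= subn1.
rewrite eqxx /= (negPf xa) /=.
have -> : [seq b <- l | (index b l).+1 != i.+1] = [seq b <- l | index b l != i] by [].
have ine2 : index a l != i by [].
rewrite IH //.
rewrite /unbump ltnS.
case: (ltnP i (index a l)) => h /=; last by rewrite !subn0.
by rewrite !subn1 /= prednK //; apply: leq_ltn_trans h.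
Qed.

Lemma xat_coins n (i : 'I_n.+1) e (x : 'I_n -> R) j : (j < n.+1)%N ->
  xat (coins i e x) j = if j == i then (e : nat)%:R else xat x (unbump i j).
Proof.
move=> jn; have -> : j = Ordinal jn by [].
rewrite xatE /coins; case: unliftP => [j'|] ->.
  have /negPf -> : (nat_of_ord (lift i j') != i) by rewrite eq_sym; exact: neq_lift.
  by rewrite /= bumpK xatE.
by rewrite eqxx.
Qed.

Lemma rstep_inv (p q : rpt R (ycell A)) : rstep (@yface A) p q -> coord p = coord q /\ ilist p = ilist q.
Proof.
destruct 1 as [n i e c x]; destruct c as [[f l] ok].
have /and3P [/= ul /eqP /= sl /forallP /= H] := ok.
rewrite /coord /ilist /pf /pl /=.
split.
  apply/funext => a /=; rewrite ffunE.
  have Ha := H a; case: (boolP (a \in l)) => al /=.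
    move: Ha; rewrite al; case: (f a) => //= _.
    have jl : (index a l < n.+1)%N by rewrite -sl index_mem.
    rewrite xat_coins //; case: (eqVneq (index a l) i) => [E|ne] //=.
    by rewrite index_filter_ne.
  by move: Ha; rewrite (negPf al); case: (f a).
symmetry; rewrite -filter_predI; apply: eq_in_filter => a al /=.
have jl : (index a l < n.+1)%N by rewrite -sl index_mem.
rewrite xat_coins //; case: (eqVneq (index a l) i) => [E|ne] /=.
  by case: e => /=; rewrite ?ltxx ?andbF ?lt0r ?andbF.
by rewrite andbT index_filter_ne.
Qed.

Lemma requiv_inv (p q : rpt R (ycell A)) : requiv (@yface A) p q -> coord p = coord q /\ ilist p = ilist q.
Proof.
elim => [? ? /rstep_inv //| //| ? ? _ [-> ->] //| ? ? ? _ [-> ->] _ [-> ->] //].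
Qed.

Lemma ilist_act (s : {perm A}) p : ilist (ypt_act s p) = map (s^-1)%g (ilist p).
Proof.
case: p => n [c x]; rewrite /ilist /pl /=.
rewrite filter_map; congr map; apply: eq_filter => a /=.
by rewrite index_map //; apply: perm_inj.
Qed.


Lemma coord_ypt b a : coord (ypt A R b) a = (b : nat)%:R.
Proof. by rewrite /coord /pf /= ffunE. Qed.

Lemma exists_u (alpha : R -> rpt R (ycell A)) :
  is_dpath (@yface A) alpha (ypt A R false) (ypt A R true) ->
  forall a, exists u, 0 <= u <= 1 /\ a \in ilist (alpha u).
Proof.
move=> [m [t [piece [[m0 t0 tm tinc] [Hp [H0 H1]]]]]] a.
have tge0 : forall k, (k <= m)%N -> 0 <= t k.
  elim=> [|k IH] km; first by rewrite t0.
  by apply: le_trans (IH (ltnW km)) _; exact: ltW (tinc k km).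
have tle1 : forall d, (d <= m)%N -> t (m - d)%N <= 1.
  elim=> [|d IH] dm; first by rewrite subn0 tm.
  have hk : (m - d.+1 < m)%N by lia.
  have e : (m - d.+1).+1 = (m - d)%N by lia.
  by have := tinc _ hk; rewrite e => /ltW h; exact: le_trans h (IH (ltnW dm)).
have tle1' : forall k, (k <= m)%N -> t k <= 1.
  by move=> k km; have := tle1 (m - k)%N (leq_subr _ _); rewrite subKn.
have claim : forall k, (k <= m)%N ->
   (exists u, 0 <= u <= 1 /\ a \in ilist (alpha u)) \/ coord (alpha (t k)) a = 0.
  elim=> [|k IH] km.
    by right; rewrite t0; have [-> _] := requiv_inv H0; rewrite coord_ypt.
  case: (IH (ltnW km)) => [|h0]; first by left.
  have tk0 := tge0 k (ltnW km); have tk1 := tle1' k.+1 km; have tkk := ltW (tinc k km).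
  have := Hp k km; case: (piece k) => n [c b] [Hc Hmono Hb Hr].
  have Hcoord u : t k <= u <= t k.+1 -> coord (alpha u) a = coord (existT _ n (c, b u)) a.
    by move=> hu; have [-> _] := requiv_inv (Hr u hu).
  have Hil u : t k <= u <= t k.+1 -> ilist (alpha u) = ilist (existT _ n (c, b u)).
    by move=> hu; have [_ ->] := requiv_inv (Hr u hu).
  have hk0 : t k <= t k <= t k.+1 by rewrite lexx tkk.
  have hk1 : t k <= t k.+1 <= t k.+1 by rewrite lexx tkk.
  move: Hcoord Hil h0 Hb Hc.
  destruct c as [[f l] ok]; have /and3P [ul /eqP sl /forallP Hf] := ok; simpl in ul, sl, Hf.
  move=> Hcoord Hil h0 Hb Hc.
  case: (boolP (a \in l)) => al; last first.
    have := Hf a; rewrite (negPf al); case E: (f a) => [e|] // _.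
    right; change (coord (alpha (t k.+1)) a = 0); rewrite Hcoord // /coord /pf /= E; move: h0; rewrite Hcoord // /coord /pf /= E //.
  have := Hf a; rewrite al; case E: (f a) => [e|] // _.
  have jl : (index a l < n)%N by rewrite -sl index_mem.
  pose j := Ordinal jl.
  have xj u : xat (b u) (index a l) = b u j by rewrite -xatE.
  move: h0; rewrite Hcoord // /coord /pf /pl /= E xj => h0.
  have /andP [bnd0 bnd1] : 0 <= b (t k.+1) j <= 1 by exact: Hb _ _ hk1.
  have inl u : t k <= u <= t k.+1 -> 0 < b u j < 1 -> a \in ilist (alpha u).
    move=> hu bu; rewrite Hil // /ilist /pl /= mem_filter al andbT xj //.
  case: (eqVneq (b (t k.+1) j) 0) => [z|nz].
    by right; change (coord (alpha (t k.+1)) a = 0); rewrite Hcoord // /coord /pf /pl /= E xj.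
  case: (eqVneq (b (t k.+1) j) 1) => [ho|no].
    have hv : Num.min (b (t k) j) (b (t k.+1) j) <= 1/2 <= Num.max (b (t k) j) (b (t k.+1) j).
      rewrite h0 ho /Num.min /Num.max ltr01 /=; apply/andP; split.
        by rewrite divr_ge0 // ler0n.
      by rewrite ler_pdivrMr // mul1r ler1n.
    have [c0 hc0 bc0] := @IVT R (fun u => b u j) (t k) (t k.+1) (1/2) tkk (Hc j) hv.
    move: hc0; rewrite in_itv /= => /andP [c1 c2].
    left; exists c0; split; first by rewrite (le_trans tk0 c1) (le_trans c2 tk1).
    apply: inl; first by rewrite c1 c2.
    by rewrite /= bc0 divr_gt0 // ?ltr0n //= ltr_pdivrMr // mul1r ltr1n.
  left; exists (t k.+1); split; first by rewrite tk1 (le_trans tk0 tkk).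
  apply: inl => //; rewrite lt_neqAle eq_sym nz bnd0 /= lt_neqAle no bnd1 //.
case: (claim m (leqnn m)) => // ; rewrite tm; have [-> _] := requiv_inv H1.
by rewrite coord_ypt /= => /eqP; rewrite oner_eq0.
Qed.

End Inv.
Unset Implicit Arguments.
Set Strict Implicit.

Theorem proposition3p2 (A : finType) (R : realType) (alpha : R -> rpt R (ycell A))
  (s : {perm A}) :
  is_dpath (@yface A) alpha (ypt A R false) (ypt A R true) ->
  (forall u : R, 0 <= u <= 1 -> requiv (@yface A) (ypt_act s (alpha u)) (alpha u)) ->
  s = 1%g.
Proof.
move=> Hd Hs; apply/permP => a; rewrite perm1.
have [u [u01 au]] := exists_u Hd a.
have := (requiv_inv (Hs u u01)).2; rewrite ilist_act => E.
move: au E; set L := ilist (alpha u) => au E.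
have : nth a L (index a L) = nth a (map (s^-1)%g L) (index a L) by rewrite E.
rewrite (nth_map a) ?index_mem // nth_index // => h.
have h' : (s^-1)%g a = a by rewrite -h.
by rewrite -{1}h' permKV.
Qed.
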